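(* For every unit interval graph $G$ on $[n]$, $$Y_G=\sum_{D\in\mathcal A(G)}(-1)^{a(D)}\,e_1\uparrow_D .$$
   Context: Work in $\mathrm{NCSym}$ (symmetric functions in non-commuting variables $x_1,x_2,\dots$ over $\mathbb Q$); $e_1=p_1=x_1+x_2+\cdots$. A unit interval graph $G$ on $[n]$ is given by intervals $[a_1,1],\dots,[a_n,n]$ with $1\le a_1\le\cdots\le a_n$, $a_k\le k$; it has an edge between distinct $i,j$ whenever $i,j\in[a_k,k]$ for some $k$. $Y_G=\sum_\kappa x_{\kappa(1)}\cdots x_{\kappa(n)}$ over proper colorings $\kappa:[n]\to\{1,2,\dots\}$. Inducing: for $1\le j\le m-1$, $x_{i_1}\cdots x_{i_{m-1}}\uparrow_j^m=x_{i_1}\cdots x_{i_{m-1}}x_{i_j}$, extended linearly to homogeneous degree $m-1$ elements, and $f\uparrow_m^m=f\,p_1$. An arc diagram on $[n]$ is a set of arcs $(i,j)$ with $1\le i<j\le n$ such that each vertex $j$ is the right endpoint of at most one arc (its left arc). $\mathcal A(G)$ is the set of arc diagrams on $[n]$ all of whose arcs $(i,j)$ satisfy $i,j\in[a_k,k]$ for some $k$. For $D\in\mathcal A(G)$ let $a(D)$ be its number of arcs, and for $2\le j\le n$ let $i_j$ be the left endpoint of the left arc of $j$ if it exists, and $i_j=j$ otherwise; then $e_1\uparrow_D=e_1\uparrow_{i_2}^2\uparrow_{i_3}^3\cdots\uparrow_{i_n}^n$ (inducings applied successively from left to right). *)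

(* Defs.v *)
From HB Require Import structures.
From mathcomp Require Import all_boot all_order all_algebra.
Set Implicit Arguments. Unset Strict Implicit. Unset Printing Implicit Defensive.
Import Order.TTheory GRing.Theory Num.Theory.
Local Open Scope ring_scope.

(* A homogeneous noncommutative formal power series over Q in x_1, x_2, ...
   is represented by its coefficient function on words: the word
   [:: i_1; ...; i_m] (letters i_k >= 1) stands for the monomial
   x_{i_1} ... x_{i_m}. *)
Definition series := seq nat -> rat.

Definition e1 : series := fun w => if size w == 1%N then 1 else 0.

(* Inducing f (homogeneous of degree m-1) from m-1 to m at position j:
   x_{i_1}...x_{i_{m-1}} |-> x_{i_1}...x_{i_{m-1}} x_{i_j} for j < m, and
   f |-> f * p_1 for j = m. *)
Definition induce (j m : nat) (f : series) : series := fun w =>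
  if (j < m)%N then
    (if nth 0%N w j.-1 == nth 0%N w m.-1 then f (take m.-1 w) else 0)
  else f (take m.-1 w).

(* Edge relation of the unit interval graph given by [a_k, k], 1 <= k <= n
   (vertices 1-based). *)
Definition uig_edge (n : nat) (a : nat -> nat) (i j : nat) : bool :=
  (i != j) && [exists k : 'I_n, (a k.+1 <= i <= k.+1)%N && (a k.+1 <= j <= k.+1)%N].

(* Y_G: coefficient of w is 1 iff w = kappa(1)...kappa(n) for a proper
   coloring kappa : [n] -> {1,2,...}. *)
Definition YG (n : nat) (a : nat -> nat) : series := fun w =>
  if [&& size w == n, all (fun c => 0 < c)%N w &
       [forall i : 'I_n, forall j : 'I_n,
          uig_edge n a i.+1 j.+1 ==> (nth 0%N w i != nth 0%N w j)]]
  then 1 else 0.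

(* Arc diagrams on [n]: sets of arcs (i,j), vertices taken in 'I_n.+1
   (values 0..n, value 0 excluded by the condition 1 <= i). *)
Definition arc_diagram (n : nat) (D : {set 'I_n.+1 * 'I_n.+1}) : bool :=
  [forall p in D, (0 < p.1 < p.2)%N] &&
  [forall j : 'I_n.+1, #|[set p in D | p.2 == j]| <= 1]%N.

Definition inAG (n : nat) (a : nat -> nat) (D : {set 'I_n.+1 * 'I_n.+1}) : bool :=
  arc_diagram D &&
  [forall p in D, exists k : 'I_n,
     (a k.+1 <= p.1 <= k.+1)%N && (a k.+1 <= p.2 <= k.+1)%N].

Definition leftpt (n : nat) (D : {set 'I_n.+1 * 'I_n.+1}) (j : nat) : nat :=
  if [pick p in D | (p.2 : nat) == j] is Some p then (p.1 : nat) else j.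

Fixpoint e1up (n : nat) (D : {set 'I_n.+1 * 'I_n.+1}) (m : nat) : series :=
  match m with
  | 0 => e1
  | 1 => e1
  | m'.+1 => induce (leftpt D m) m (e1up D m')
  end.

(* Main.v *)
Require Import Defs.
From HB Require Import structures.
From mathcomp Require Import all_boot all_order all_algebra zify.
Import Order.TTheory GRing.Theory Num.Theory.
Local Open Scope ring_scope.


Lemma sum_option (T : finType) (F : option T -> rat) :
  \sum_(o : option T) F o = F None + \sum_(x : T) F (Some x).
Proof.
rewrite (bigD1 None) //=; congr (_ + _).
rewrite (reindex_omap Some id).
 by apply: eq_big => // x; rewrite eqxx.
by case=> // x.
Qed.

Definition Lr (n : nat) (a : nat -> nat) (i j : nat) : bool :=
  (0 < i < j)%N && [exists k : 'I_n, (a k.+1 <= i <= k.+1)%N && (a k.+1 <= j <= k.+1)%N].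
Definition colw (w : seq nat) (v : nat) : nat := nth 0%N w v.-1.
Definition cnt n a w (j : 'I_n.+1) : nat :=
  #|[pred i : 'I_n.+1 | Lr n a i j && (colw w i == colw w j)]|.
Definition Fw n a w (j : 'I_n.+1) (o : option 'I_n.+1) : rat :=
  if o is Some i then (if Lr n a i j then - (colw w i == colw w j)%:R else 0) else 1.

Lemma step1 n a w :
  \prod_(j : 'I_n.+1) (1 - (cnt n a w j)%:R) =
  \sum_(f : {ffun 'I_n.+1 -> option 'I_n.+1}) \prod_j Fw n a w j (f j).
Proof.
rewrite -(bigA_distr_bigA (Fw n a w)); apply: eq_bigr => j _.
rewrite sum_option /=; congr (_ + _).
rewrite /cnt -sum1_card natr_sum -sumrN big_mkcond /=; apply: eq_bigr => i _.
rewrite !inE /=; case: (Lr n a i j); case: (colw w i == colw w j) => //=.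
Qed.

Lemma Lr_trans n a i i' j : Lr n a i j -> Lr n a i' j -> (i < i')%N -> Lr n a i i'.
Proof.
case/andP=> /andP [i0 ij] /existsP [k /andP [/andP [h1 h2] /andP [h3 h4]]].
case/andP=> /andP [i'0 i'j] _ ii'.
rewrite /Lr i0 ii' /=; apply/existsP; exists k.
rewrite h1 h2 (leq_trans h1 (ltnW ii')) /=.
by rewrite (leq_trans (ltnW i'j) h4).
Qed.

Definition Bc n a w := [forall j : 'I_n.+1, cnt n a w j == 0%N].

Lemma step3R n a w :
  (\prod_(j : 'I_n.+1) (1 - (cnt n a w j)%:R) : rat) = (if Bc n a w then 1 else 0 : rat).
Proof.
case: (boolP (Bc n a w)) => HB.
  by apply: big1 => j _; rewrite (eqP (forallP HB j)) subr0.
have exP : exists m, (m < n.+1)%N && (cnt n a w (inord m) != 0%N).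
  move: HB; rewrite negb_forall => /existsP [j Hj].
  by exists j; rewrite ltn_ord inord_val.
case: (ex_minnP exP) => m /andP [mn cm] mmin.
set j : 'I_n.+1 := inord m in cm.
have c1 : cnt n a w j = 1%N.
  apply/eqP; rewrite eqn_leq lt0n cm andbT.
  apply/card_le1_eqP => x y; rewrite !inE /= => /andP [Lx /eqP cx] /andP [Ly /eqP cy].
  apply/eqP; apply/negP => /negP; rewrite -val_eqE /= => nxy.
  wlog xy : x y Lx cx Ly cy nxy / (x < y)%N.
    move=> H; move: nxy; rewrite neq_ltn => /orP [] h.
      by apply: (H y x Ly cy Lx cx _ h); rewrite neq_ltn h ?orbT.
    by apply: (H x y Lx cx Ly cy _ h); rewrite neq_ltn h ?orbT.
  have Lxy := @Lr_trans n a x y j Lx Ly xy.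
  have Py : (y < n.+1)%N && (cnt n a w (inord y) != 0%N).
    rewrite ltn_ord inord_val /= -lt0n; apply/card_gt0P; exists x.
    by rewrite inE /= Lxy cx cy eqxx.
  have := mmin _ Py.
  have : (y < j)%N by case/andP: Ly => /andP [].
  by rewrite /j inordK // => h1 h2; move: (leq_trans h1 h2); rewrite ltnn.
by rewrite (bigD1 j) //= c1 subrr mul0r.
Qed.

Lemma Bc_no n a w : Bc n a w -> forall x y : nat, Lr n a x y -> (y <= n)%N -> colw w x != colw w y.
Proof.
move=> HB x y Lxy yn; apply/negP => /eqP cxy.
have := forallP HB (inord y); move/eqP/card0_eq/(_ (inord x)).
have xy : (x < y)%N by case/andP: Lxy => /andP [].
rewrite !inE /= !inordK ?Lxy ?cxy ?eqxx //; exact: leq_trans xy (leqW yn).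
Qed.

Lemma step3L n a w : size w = n -> all (fun c => 0 < c)%N w ->
  YG n a w = (if Bc n a w then 1 else 0 : rat).
Proof.
move=> sw pw; rewrite /YG sw eqxx pw /=.
congr (if _ then _ else _); apply/idP/idP.
- move=> Fb; apply/forallP => j; apply/eqP/eq_card0 => i; rewrite !inE /=.
  apply/negbTE/negP => /andP [Lij /eqP ce].
  have Lij' := Lij.
  case/andP: Lij' => /andP [i0 ij] /existsP [k /andP [hi hj]].
  have jn := ltn_ord j.
  have hi' : (i.-1 < n)%N by lia.
  have hj' : (j.-1 < n)%N by lia.
  move/forallP: Fb => /(_ (Ordinal hi')) /forallP /(_ (Ordinal hj')) /implyP.
  rewrite /= !prednK ?(leq_trans i0 (ltnW ij)) //.
  have -> : uig_edge n a i j.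
    rewrite /uig_edge (ltn_eqF ij) /=; apply/existsP; exists k.
    by rewrite hi hj.
  by move=> /(_ isT); rewrite /colw in ce; rewrite ce eqxx.
- move=> HB; apply/forallP => i; apply/forallP => j; apply/implyP.
  case/andP => nij /existsP [k /andP [hi hj]].
  move: nij; rewrite neq_ltn => /orP [] h.
  + have L : Lr n a i.+1 j.+1 by rewrite /Lr h /=; apply/existsP; exists k; rewrite hi hj.
    by have := @Bc_no n a w HB _ _ L (ltn_ord j).
  + have L : Lr n a j.+1 i.+1 by rewrite /Lr h /=; apply/existsP; exists k; rewrite hi hj.
    by rewrite eq_sym; have := @Bc_no n a w HB _ _ L (ltn_ord i).
Qed.

Set Implicit Arguments. Unset Strict Implicit.

Definition pk n (D : {set 'I_n.+1 * 'I_n.+1}) (j : nat) := [pick p in D | (p.2 : nat) == j].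
Definition valid n a (f : {ffun 'I_n.+1 -> option 'I_n.+1}) : bool :=
  [forall j, if f j is Some i then Lr n a i j else true].
Definition toSet n (f : {ffun 'I_n.+1 -> option 'I_n.+1}) : {set 'I_n.+1 * 'I_n.+1} :=
  [set p | f p.2 == Some p.1].
Definition fD n (D : {set 'I_n.+1 * 'I_n.+1}) : {ffun 'I_n.+1 -> option 'I_n.+1} :=
  [ffun j : 'I_n.+1 => omap (fun p : 'I_n.+1 * 'I_n.+1 => p.1) (pk D j)].
Definition uniqD n (D : {set 'I_n.+1 * 'I_n.+1}) :=
  forall p q, p \in D -> q \in D -> p.2 = q.2 -> p = q.
Definition gD n (w : seq nat) (D : {set 'I_n.+1 * 'I_n.+1}) (j : nat) : rat :=
  if pk D j is Some p then (colw w p.1 == colw w j)%:R else 1.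

Lemma inAG_P n a (D : {set 'I_n.+1 * 'I_n.+1}) : @inAG n a D -> (forall p, p \in D -> Lr n a p.1 p.2) /\ @uniqD n D.
Proof.
case/andP => /andP [H1 H2] H3; split.
  by move=> p pD; rewrite /Lr (forall_inP H1 p pD) (forall_inP H3 p pD).
move=> p q pD qD e.
have /card_le1_eqP H := forallP H2 p.2.
by apply: H; rewrite !inE ?pD ?qD ?e eqxx.
Qed.

Lemma inAG_I n a (D : {set 'I_n.+1 * 'I_n.+1}) : (forall p, p \in D -> Lr n a p.1 p.2) -> @uniqD n D -> @inAG n a D.
Proof.
move=> HL HU; apply/andP; split; [apply/andP; split|].
- by apply/forall_inP => p pD; case/andP: (HL p pD).
- apply/forallP => j; apply/card_le1_eqP => x y.
  rewrite !inE => /andP [xD /eqP xj] /andP [yD /eqP yj].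
  by apply: HU => //; rewrite xj yj.
- by apply/forall_inP => p pD; case/andP: (HL p pD).
Qed.

Lemma pkS n (D : {set 'I_n.+1 * 'I_n.+1}) j p : pk D j = Some p -> p \in D /\ (p.2 : nat) = j.
Proof. by rewrite /pk; case: pickP => // q /andP [qD /eqP qj] [<-]. Qed.

Lemma pkN n (D : {set 'I_n.+1 * 'I_n.+1}) j : pk D j = None -> forall p, p \in D -> (p.2 : nat) != j.
Proof.
rewrite /pk; case: pickP => // H _ p pD; apply/negP => pj.
by have := H p; rewrite pD pj.
Qed.

Lemma pair_eq n (p q : 'I_n.+1 * 'I_n.+1) : p.1 = q.1 -> (p.2 : nat) = q.2 -> p = q.
Proof. by case: p => p1 p2; case: q => q1 q2 /= -> e; congr pair; apply: val_inj. Qed.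

Lemma pkE n (D : {set 'I_n.+1 * 'I_n.+1}) p : uniqD D -> p \in D -> pk D p.2 = Some p.
Proof.
move=> HU pD; case E: (pk D p.2) => [q|].
  have [qD qj] := pkS E; congr Some; apply: HU => //; exact: val_inj.
by have := pkN E pD; rewrite eqxx.
Qed.

Lemma toSet_fD n (D : {set 'I_n.+1 * 'I_n.+1}) : uniqD D -> toSet (fD D) = D.
Proof.
move=> HU; apply/setP => p; rewrite inE ffunE.
case: (boolP (p \in D)) => pD; first by rewrite (pkE HU pD) /= eqxx.
case E: (pk D p.2) => [q|] //=.
have [qD qj] := pkS E. apply/negP => /eqP [e].
have qp : q = p by apply: pair_eq.
by rewrite -qp qD in pD.
Qed.

Lemma fD_valid n a (D : {set 'I_n.+1 * 'I_n.+1}) :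
  (forall p, p \in D -> Lr n a p.1 p.2) -> valid a (fD D).
Proof.
move=> HL; apply/forallP => j; rewrite ffunE; case E: (pk D j) => [q|] //=.
by have [qD qj] := pkS E; rewrite -qj; apply: HL.
Qed.

Lemma toSet_inj n (f g : {ffun 'I_n.+1 -> option 'I_n.+1}) : toSet f = toSet g -> f = g.
Proof.
move=> e; apply/ffunP => j.
have key : forall i, (f j == Some i) = (g j == Some i).
  by move=> i; have := congr1 (fun S : {set 'I_n.+1 * 'I_n.+1} => (i, j) \in S) e; rewrite /= !inE.
case Ef: (f j) => [i|]; case Eg: (g j) => [i'|] //.
- by have := key i; rewrite Ef Eg eqxx => /esym /eqP ->.
- by have := key i; rewrite Ef Eg eqxx.
- by have := key i'; rewrite Ef Eg eqxx.
Qed.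

Lemma valid_inAG n a (f : {ffun 'I_n.+1 -> option 'I_n.+1}) : valid a f -> @inAG n a (toSet f).
Proof.
move=> Hv; apply: inAG_I.
- by move=> p; rewrite inE => /eqP e; have := forallP Hv p.2; rewrite e.
- move=> p q; rewrite !inE => /eqP ep /eqP eq e.
  move: ep; rewrite e eq => -[h]; apply: pair_eq => //; by rewrite e.
Qed.

Lemma fD_toSet n a (f : {ffun 'I_n.+1 -> option 'I_n.+1}) : valid a f -> fD (toSet f) = f.
Proof.
move=> Hv; apply: toSet_inj; apply: toSet_fD.
by case: (inAG_P (valid_inAG Hv)).
Qed.

Lemma card_pk n (D : {set 'I_n.+1 * 'I_n.+1}) : uniqD D ->
  #|D| = (\sum_(j : 'I_n.+1) (pk D j != None : nat))%N.
Proof.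
move=> HU; rewrite -sum1_card (partition_big (fun p : 'I_n.+1 * 'I_n.+1 => p.2) predT) //=.
apply: eq_bigr => j _; rewrite sum1dep_card.
case E: (pk D j) => [q|] /=.
- have [qD qj] := pkS E; rewrite -(cards1 q). apply: eq_card => p; rewrite !inE.
  apply/idP/eqP => [/andP [pD /eqP pj]|->].
    by apply: HU => //; rewrite pj; apply: val_inj.
  by rewrite qD; apply/eqP/val_inj.
- apply/eqP; rewrite cards_eq0; apply/eqP/setP => p; rewrite !inE.
  apply/negbTE/negP => /andP [pD /eqP pj].
  by have := pkN E pD; rewrite pj eqxx.
Qed.

Lemma e1upS n (D : {set 'I_n.+1 * 'I_n.+1}) m :
  e1up D m.+2 = induce (leftpt D m.+2) m.+2 (e1up D m.+1).
Proof. by []. Qed.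

Lemma e1up_prod n (D : {set 'I_n.+1 * 'I_n.+1}) m w :
  (forall p, p \in D -> (p.1 < p.2)%N) -> size w = m.+1 ->
  e1up D m.+1 w = \prod_(2 <= j < m.+2) gD w D j.
Proof.
move=> HD; elim: m w => [|m IH] w sw.
  by rewrite big_geq //= /e1 sw.
rewrite big_nat_recr // e1upS /induce.
have st : size (take m.+1 w) = m.+1 by rewrite size_take sw ltnSn.
have Ep : \prod_(2 <= j < m.+2) gD (take m.+1 w) D j = \prod_(2 <= j < m.+2) gD w D j.
  apply: eq_big_nat => j /andP [j2 jm]; rewrite /gD.
  case E': (pk D j) => [q|] //; have [qD qj] := pkS E'.
  have := HD q qD; rewrite qj => qlt.
  rewrite /colw !nth_take //; lia.
rewrite IH // Ep /leftpt -/(pk D m.+2).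
case E: (pk D m.+2) => [p|].
- have [pD p2] := pkS E; have := HD p pD; rewrite p2 => ->.
  rewrite /gD E /colw /=; case: eqP => _; by rewrite ?mulr1 ?mulr0.
- rewrite ltnn /gD E. by rewrite Monoid.mulm1.
Qed.

Lemma weight n a w (D : {set 'I_n.+1 * 'I_n.+1}) : (0 < n)%N -> size w = n -> @inAG n a D ->
  \prod_(j : 'I_n.+1) Fw n a w j (fD D j) = (-1) ^+ #|D| * e1up D n w.
Proof.
move=> n0 sw HA; have [HL HU] := inAG_P HA.
have HD : forall p, p \in D -> (p.1 < p.2)%N by move=> p /HL /andP [/andP []].
have E1 : e1up D n w = \prod_(2 <= j < n.+1) gD w D j.
  by have := @e1up_prod n D n.-1 w HD; rewrite prednK //; apply.
have g01 : forall j : nat, (j < 2)%N -> gD w D j = 1.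
  move=> j j2; rewrite /gD; case E: (pk D j) => [p|] //.
  have [pD pj] := pkS E; have := HL p pD; rewrite pj.
  by case/andP => /andP [h1 h2] _; lia.
have E2 : \prod_(2 <= j < n.+1) gD w D j = \prod_(j : 'I_n.+1) gD w D j.
  have le2 : (2 <= n.+1)%N by lia.
  rewrite -(big_mkord xpredT (fun j => gD w D j)) (@big_cat_nat _ _ _ 2 0 n.+1 _ _ (leq0n _) le2) /=.
  rewrite [X in _ = X * _]big_nat_cond [X in _ = X * _]big1 ?mul1r // => i /andP [/andP [_ i2] _]; exact: g01.
rewrite E1 E2 (card_pk HU) expr_sum -big_split /=.
apply: eq_bigr => j _; rewrite /Fw ffunE /gD.
case E: (pk D j) => [p|] /=.
- have [pD pj] := pkS E; have := HL p pD; rewrite pj => ->.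
  by rewrite expr1 mulN1r.
- by rewrite expr0 mulr1.
Qed.

Lemma step2 n a w : (0 < n)%N -> size w = n ->
  \sum_(f : {ffun 'I_n.+1 -> option 'I_n.+1}) \prod_j Fw n a w j (f j) =
  \sum_(D : {set 'I_n.+1 * 'I_n.+1} | @inAG n a D) (-1) ^+ #|D| * e1up D n w.
Proof.
move=> n0 sw.
rewrite (bigID (@valid n a)) /= [X in _ + X]big1 ?addr0; last first.
  move=> f; rewrite negb_forall => /existsP [j]; case E: (f j) => [i|] // nL.
  by rewrite (bigD1 j) //= E /Fw (negbTE nL) mul0r.
rewrite (partition_big (@toSet n) (@inAG n a)) /=; last by move=> f; exact: valid_inAG.
apply: eq_bigr => D HA.
rewrite (big_pred1 (fD D)); first exact: weight.
move=> f /=; apply/andP/eqP => [[Hv /eqP <-]|->].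
  by rewrite (fD_toSet Hv).
have [HL HU] := inAG_P HA.
by rewrite fD_valid // toSet_fD.
Qed.

Unset Implicit Arguments. Set Strict Implicit.

Theorem mainTheorem3 (n : nat) (a : nat -> nat)
  (hn : (0 < n)%N)
  (ha1 : (1 <= a 1)%N)
  (hmono : forall k : nat, (1 <= k)%N -> (k < n)%N -> (a k <= a k.+1)%N)
  (hak : forall k : nat, (1 <= k <= n)%N -> (a k <= k)%N) :
  forall w : seq nat, size w = n -> all (fun c => 0 < c)%N w ->
    @YG n a w =
    \sum_(D : {set 'I_n.+1 * 'I_n.+1} | @inAG n a D) (-1) ^+ #|D| * @e1up n D n w.
Proof.
move=> w sw pw.
rewrite (@step3L n a w sw pw) -(@step3R n a w) (@step1 n a w).
exact: step2.
Qed.
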